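(* Let $M$ be a finitely generated permutable monoid. Then the language $\{a^nb^n : n\ge1\}^*$ over $\{a,b\}$ does not belong to $\mathfrak{L}_{Rat}(M)$.
   Context: A monoid $M$ is permutable if for some $n\ge 2$, for all $s_1,\dots,s_n\in M$ there is a non-identity permutation $\sigma$ of $\{1,\dots,n\}$ with $s_1\cdots s_n=s_{\sigma(1)}\cdots s_{\sigma(n)}$. An $M$-automaton is a tuple $(Q,\Sigma,M,\delta,q_0,Q_a)$ with finite state set, input alphabet $\Sigma$, initial state $q_0$, accept states $Q_a$, and $\delta: Q\times(\Sigma\cup\{\varepsilon\})\to\mathbb{P}(Q\times M)$ finite-valued; $(q',m)\in\delta(q,\sigma)$ means reading $\sigma$ in state $q$ it may go to $q'$ and multiply the register on the right by $m$. A rational monoid automaton over $M$ is an $M$-automaton with rational subsets $I_0,I_1\subseteq M$; $w$ is accepted if some computation reading $w$ from $q_0$ to an accept state has register product $x$ with $x_0x\in I_1$ for some $x_0\in I_0$. $\mathfrak{L}_{Rat}(M)$ is the family of languages so accepted. *)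

(* Defs.v *)
From mathcomp Require Import all_boot all_fingroup.
From Stdlib Require List.
Set Implicit Arguments.
Unset Strict Implicit.
Unset Printing Implicit Defensive.

Record monoid := Monoid {
  mcarrier :> Type;
  mmul : mcarrier -> mcarrier -> mcarrier;
  mone : mcarrier;
  mmulA : forall x y z, mmul x (mmul y z) = mmul (mmul x y) z;
  mmul1l : forall x, mmul mone x = x;
  mmul1r : forall x, mmul x mone = x
}.

Definition mprod (M : monoid) (l : list M) : M := List.fold_right (@mmul M) (mone M) l.

Definition finitely_generated (M : monoid) : Prop :=
  exists gens : list M, forall x : M,
    exists l : list M, (forall g, List.In g l -> List.In g gens) /\ mprod l = x.

Definition permutable (M : monoid) : Prop :=
  exists n : nat, 2 <= n /\
    forall s : 'I_n -> M, exists sigma : {perm 'I_n},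
      sigma != 1%g /\
      mprod (map s (enum 'I_n)) = mprod (map (fun i => s (sigma i)) (enum 'I_n)).

Inductive ratexp (M : monoid) : Type :=
| REmpty : ratexp M
| RElt : M -> ratexp M
| RUnion : ratexp M -> ratexp M -> ratexp M
| RProd : ratexp M -> ratexp M -> ratexp M
| RStar : ratexp M -> ratexp M.

Fixpoint rsem (M : monoid) (e : ratexp M) : M -> Prop :=
  match e with
  | REmpty => fun _ => False
  | RElt m => fun x => x = m
  | RUnion e1 e2 => fun x => rsem e1 x \/ rsem e2 x
  | RProd e1 e2 => fun x => exists y z, rsem e1 y /\ rsem e2 z /\ x = mmul y z
  | RStar e1 => fun x => exists l : list M,
                  (forall y, List.In y l -> rsem e1 y) /\ x = mprod l
  end.

(* the rational subsets: smallest family containing finite sets and closed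
   under union, product and Kleene star *)
Definition rational (M : monoid) (X : M -> Prop) : Prop :=
  exists e : ratexp M, forall x, X x <-> rsem e x.

Record mautomaton (M : monoid) (Sigma : Type) := MAutomaton {
  state : finType;
  (* delta q (Some a) / delta q None (epsilon): finite list of (q', m) *)
  delta : state -> option Sigma -> list (state * M);
  q0 : state;
  accepting : state -> Prop
}.
Arguments delta {M Sigma} A _ _ : rename.
Arguments accepting {M Sigma} A _ : rename.
Arguments q0 {M Sigma} A : rename.
Arguments state {M Sigma} A : rename.

(* run A q w x q' : from q, reading w, the automaton can reach q' with
   register product x (register starts at 1, multiplied on the right) *)
Inductive run (M : monoid) (Sigma : Type) (A : mautomaton M Sigma) :
  state A -> list Sigma -> M -> state A -> Prop :=
| run_nil : forall q, @run M Sigma A q nil (mone M) q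
| run_letter : forall q a q1 m w x q',
    List.In (q1, m) (delta A q (Some a)) -> @run M Sigma A q1 w x q' ->
    @run M Sigma A q (a :: w) (mmul m x) q'
| run_eps : forall q q1 m w x q',
    List.In (q1, m) (delta A q None) -> @run M Sigma A q1 w x q' ->
    @run M Sigma A q w (mmul m x) q'.

Definition rat_accepts (M : monoid) (Sigma : Type) (A : mautomaton M Sigma)
  (I0 I1 : M -> Prop) (w : list Sigma) : Prop :=
  exists (q : state A) (x : M), @run M Sigma A (q0 A) w x q /\ accepting A q /\
    exists x0, I0 x0 /\ I1 (mmul x0 x).

Definition in_LRat (M : monoid) (Sigma : Type) (L : list Sigma -> Prop) : Prop :=
  exists (A : mautomaton M Sigma) (I0 I1 : M -> Prop),
    rational I0 /\ rational I1 /\ forall w, L w <-> rat_accepts A I0 I1 w.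

Inductive ab : Type := La | Lb.

Inductive anbn_star : list ab -> Prop :=
| anbn_nil : anbn_star nil
| anbn_cons : forall n w, 1 <= n -> anbn_star w ->
    anbn_star (nseq n La ++ nseq n Lb ++ w).

(* Main.v *)
Require Import Defs.
From mathcomp Require Import all_boot all_fingroup zify.
From Stdlib Require List.
Set Implicit Arguments. Unset Strict Implicit. Unset Printing Implicit Defensive.

Lemma mprod_nil (M : monoid) : mprod ([::] : seq M) = mone M.
Proof. by []. Qed.
Lemma mprod_cons (M : monoid) (x : M) l : mprod (x :: l) = mmul x (mprod l).
Proof. by []. Qed.
Lemma mprod_cat (M : monoid) (l1 l2 : seq M) :
  mprod (l1 ++ l2) = mmul (mprod l1) (mprod l2).
Proof.
elim: l1 => [|x l IH]; first by rewrite mprod_nil mmul1l.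
by rewrite cat_cons !mprod_cons IH mmulA.
Qed.

Section Runs.
Variables (M : monoid) (S : Type) (A : mautomaton M S).
Local Notation RUN := (@run M S A).

Lemma run_app q u x1 q1 v x2 q' :
  RUN q u x1 q1 -> RUN q1 v x2 q' -> RUN q (u ++ v) (mmul x1 x2) q'.
Proof.
elim=> {q u x1 q1} [q|q a q2 m w x q3 Hin _ IH|q q2 m w x q3 Hin _ IH] H2.
- by rewrite mmul1l.
- rewrite -mmulA cat_cons; exact: run_letter Hin (IH H2).
- rewrite -mmulA; exact: run_eps Hin (IH H2).
Qed.

Lemma run_split q w x q' : RUN q w x q' ->
  forall u v, w = u ++ v -> exists q1 x1 x2,
    RUN q u x1 q1 /\ RUN q1 v x2 q' /\ x = mmul x1 x2.
Proof.
elim=> {q w x q'} [q|q a q2 m w x q3 Hin Hr IH|q q2 m w x q3 Hin Hr IH] u v.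
- case: u => [|? ?] //= <-; exists q, (mone M), (mone M).
  by split; [exact: run_nil| split; [exact: run_nil| rewrite mmul1l]].
- case: u => [|b u] /=.
  + move=> <-; exists q, (mone M), (mmul m x).
    split; [exact: run_nil| split; [exact: run_letter Hin Hr| by rewrite mmul1l]].
  + case=> <- /IH [q1 [x1 [x2 [H1 [H2 ->]]]]].
    exists q1, (mmul m x1), x2; split; [exact: run_letter Hin H1| split=> //].
    by rewrite mmulA.
- move=> /IH [q1 [x1 [x2 [H1 [H2 ->]]]]].
  exists q1, (mmul m x1), x2; split; [exact: run_eps Hin H1| split=> //].
  by rewrite mmulA.
Qed.

Lemma run_split_iota (f : nat -> seq S) t q' k : forall s q x,
  RUN q (flatten (map f (iota s k)) ++ t) x q' ->
  exists (st : nat -> state A) (ms : nat -> M) y,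
    st s = q /\ (forall i, s <= i < s + k -> RUN (st i) (f i) (ms i) (st i.+1)) /\
    RUN (st (s + k)) t y q' /\ x = mmul (mprod (map ms (iota s k))) y.
Proof.
elim: k => [|k IH] s q x.
- move=> H; exists (fun _ => q), (fun _ => mone M), x; rewrite addn0.
  split=> //; split; first by move=> i; lia.
  by split=> //; rewrite mmul1l.
- rewrite [iota _ _]/= [map _ _]/= [flatten _]/= -catA.
  move=> /run_split /(_ _ _ erefl) [q1 [x1 [x2 [H1 [H2 ->]]]]].
  have [st [ms [y [Hs [Hi [Ht Hx]]]]]] := IH _ _ _ H2.
  exists (fun i => if i == s then q else st i), (fun i => if i == s then x1 else ms i), y.
  split; first by rewrite eqxx.
  split.
  + move=> i hi; have -> : (i.+1 == s) = false by apply/negbTE/eqP; lia.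
    case: (eqVneq i s) => [->|ne]; first by rewrite Hs.
    apply: Hi; lia.
  + split.
      have -> : (s + k.+1 == s) = false by apply/negbTE/eqP; lia.
      by rewrite -addSnnS.
    rewrite Hx mprod_cons eqxx mmulA; congr (mmul (mmul _ _) _); congr mprod.
    apply/eq_in_map => i; rewrite mem_iota => hi.
    by have -> : (i == s) = false by apply/negbTE/eqP; lia.
Qed.

Lemma run_comp (f : nat -> seq S) (st : nat -> state A) ms d : forall i,
  (forall j, i <= j < i + d -> RUN (st j) (f j) (ms j) (st j.+1)) ->
  RUN (st i) (flatten (map f (iota i d))) (mprod (map ms (iota i d))) (st (i + d)).
Proof.
elim: d => [|d IH] i H; first by rewrite addn0; exact: run_nil.
rewrite [iota _ _]/= [map _ _]/= [flatten _]/= mprod_cons -addSnnS.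
apply: run_app; first by apply: H; lia.
apply: IH => j Hj; apply: H; lia.
Qed.

Lemma run_loops q (U : nat -> seq S) (mU : nat -> M) n :
  (forall j, j < n -> RUN q (U j) (mU j) q) ->
  forall l, all (fun j => j < n) l -> RUN q (flatten (map U l)) (mprod (map mU l)) q.
Proof.
move=> H; elim=> [|j l IH]; first by move=> _; exact: run_nil.
move=> /andP[Hj Hl]; rewrite [map _ _]/= [flatten _]/= mprod_cons.
exact: run_app (H _ Hj) (IH Hl).
Qed.
End Runs.

Lemma flat_tele (T : Type) (f : nat -> seq T) a b c : a <= b -> b <= c ->
  flatten (map f (iota a (b - a))) ++ flatten (map f (iota b (c - b)))
  = flatten (map f (iota a (c - a))).
Proof.
move=> hab hbc; have -> : c - a = (b - a) + (c - b) by lia.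
rewrite iotaD map_cat flatten_cat; have -> : a + (b - a) = b by lia.
by [].
Qed.

Lemma mprod_tele (M : monoid) (f : nat -> M) a b c : a <= b -> b <= c ->
  mmul (mprod (map f (iota a (b - a)))) (mprod (map f (iota b (c - b))))
  = mprod (map f (iota a (c - a))).
Proof.
move=> hab hbc; have -> : c - a = (b - a) + (c - b) by lia.
rewrite iotaD map_cat mprod_cat; have -> : a + (b - a) = b by lia.
by [].
Qed.

Lemma pigeon (T : finType) (f : nat -> T) (s : seq nat) n :
  #|T| * n < size s -> exists qq, n < count (fun c => f c == qq) s.
Proof.
move=> hs.
have Hsum : \sum_(qq : T) count (fun c => f c == qq) s = size s.
  elim: s {hs} => [|x s IH]; first by rewrite big1.
  rewrite /= big_split /= IH (bigD1 (f x)) //= eqxx big1 ?addn0 ?add1n //.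
  by move=> qq /negbTE; rewrite eq_sym => ->.
case: (pickP (fun qq => n < count (fun c => f c == qq) s)) => [qq H|H].
  by exists qq.
have : size s <= #|T| * n.
  rewrite -Hsum -sum_nat_const; apply: leq_sum => qq _.
  by move: (H qq) => /= /negbT; rewrite -leqNgt.
lia.
Qed.

Definition Aw (i : nat) : seq ab := nseq i Lb ++ nseq i.+1 La.
Definition Bw (i : nat) : seq ab := nseq i La ++ nseq i Lb.

Lemma nseq_eq (x y : ab) i j s s' : x <> y -> head y s = y -> head y s' = y ->
  nseq i x ++ s = nseq j x ++ s' -> i = j /\ s = s'.
Proof.
move=> xy hs hs'; elim: i j => [|i IH] [|j] //=.
- by move=> E; rewrite E /= in hs; case: (xy hs).
- by move=> E; rewrite -E /= in hs'; case: (xy hs').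
- by case=> /IH [-> ->].
Qed.

Lemma anbn_head w : anbn_star w -> head La w = La.
Proof. by case=> // -[|n] w' //. Qed.

Lemma hd_nseq (x : ab) i s : 1 <= i -> head x (nseq i x ++ s) = x.
Proof. by case: i. Qed.

Lemma cancel_block i s : 1 <= i -> head La s = La ->
  anbn_star (nseq i La ++ nseq i Lb ++ s) -> anbn_star s.
Proof.
move=> hi hs; move E: (nseq i La ++ _) => w' H; case: H E => [|n w hn hw] E.
  by case: i hi E.
have [ein E2] := nseq_eq (x:=La) (y:=Lb) ltac:(by []) (hd_nseq _ _ hi) (hd_nseq _ _ hn) E.
subst n.
have [_ ->] := nseq_eq (x:=Lb) (y:=La) ltac:(by []) hs (anbn_head hw) E2.
exact: hw.
Qed.

Lemma final_neq c d r : 1 <= c -> 1 <= d ->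
  anbn_star (nseq c La ++ nseq d Lb ++ La :: r) -> c = d.
Proof.
move=> hc hd; move E: (nseq c La ++ _) => w' H; case: H E => [|n w hn hw] E.
  by case: c hc E.
have [ein E2] := nseq_eq (x:=La) (y:=Lb) ltac:(by []) (hd_nseq _ _ hd) (hd_nseq _ _ hn) E.
subst n.
by have [-> _] := nseq_eq (x:=Lb) (y:=La) ltac:(by []) (erefl La : head La (La :: r) = La) (anbn_head hw) E2.
Qed.

Lemma blocks_in l w : all (leq 1) l -> anbn_star w -> anbn_star (flatten (map Bw l) ++ w).
Proof.
elim: l => [|i l IH] //= /andP[hi hl] hw.
rewrite -catA /Bw -catA; apply: anbn_cons => //; exact: IH.
Qed.

Lemma blocks_cancel l s : all (leq 1) l -> head La s = La ->
  anbn_star (flatten (map Bw l) ++ s) -> anbn_star s.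
Proof.
move=> + hs; elim: l => [|i l IH] //= /andP[hi hl].
rewrite -catA /Bw -catA => H; apply: IH => //; apply: (cancel_block hi) H.
case: l hl => [|j l] //= /andP[hj _]; rewrite /Bw -!catA; exact: hd_nseq.
Qed.

Lemma A_to_B c : flatten (map Aw (iota 0 c.+1)) = flatten (map Bw (iota 1 c)) ++ nseq c.+1 La.
Proof.
elim: c => [|c IH]; first by [].
have -> : iota 0 c.+2 = iota 0 c.+1 ++ [:: c.+1] by rewrite -[c.+2]addn1 iotaD.
have -> : iota 1 c.+1 = iota 1 c ++ [:: c.+1] by rewrite -[c.+1]addn1 iotaD add1n addn1.
rewrite !map_cat !flatten_cat IH /= /Aw /Bw !cats0 -!catA; congr (_ ++ _); by rewrite /= -catA.
Qed.

Theorem corollary1 (M : monoid) :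
  finitely_generated M -> permutable M -> ~ in_LRat M anbn_star.
Proof.
move=> _ [n [hn Hperm]] [A [I0 [I1 [_ [_ HL]]]]].
pose N := #|state A|.
pose k := (N * n).+1.
pose w := flatten (map Aw (iota 0 k)) ++ nseq k Lb.
have hw : anbn_star w.
  have -> : w = flatten (map Bw (iota 1 k)) ++ [::].
    rewrite /w /k A_to_B -[(N * n).+1]addn1 iotaD add1n map_cat flatten_cat /= /Bw !cats0.
    by rewrite addn1 -catA.
  apply: blocks_in; last exact: anbn_nil.
  by apply/allP => i; rewrite mem_iota => /andP[].
have [qf [x [Hrun [Hacc [x0 [Hx0 Hx1]]]]]] := (HL w).1 hw.
have [st [ms [y [Hst0 [Hst [Htail Hx]]]]]] := run_split_iota Hrun.
rewrite add0n in Htail Hst.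
have [qq Hqq] := @pigeon (state A) st (iota 1 k) n ltac:(by rewrite size_iota /k ltnSn).
pose F := [seq c <- iota 1 k | st c == qq].
have hF : n < size F by rewrite size_filter.
pose c j := nth 0 F j.
have hc_in : forall j, j < size F -> 1 <= c j <= k /\ st (c j) = qq.
  move=> j hj; have := mem_nth 0 hj; rewrite mem_filter mem_iota => /andP[/eqP -> h].
  split=> //; move: h; rewrite /k; lia.
have hsort : sorted ltn F by apply: sorted_filter; [exact: ltn_trans| exact: iota_ltn_sorted].
have hc_lt : forall i j, i < j -> j < size F -> c i < c j.
  move=> i j hij hj; apply: (sorted_ltn_nth ltn_trans 0 hsort) => //; rewrite inE; lia.
have hc_le : forall i j, i <= j -> j < size F -> c i <= c j.
  move=> i j; rewrite leq_eqVlt => /orP[/eqP -> //|hij] hj; exact: ltnW (hc_lt _ _ hij hj).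
pose U j := flatten (map Aw (iota (c j) (c j.+1 - c j))).
pose mU j := mprod (map ms (iota (c j) (c j.+1 - c j))).
have hrange : forall i d, i + d <= k ->
    forall j, i <= j < i + d -> @run M ab A (st j) (Aw j) (ms j) (st j.+1).
  move=> i d hid j hj; apply: Hst; lia.
have hloops : forall j, j < n -> @run M ab A qq (U j) (mU j) qq.
  move=> j hj.
  have hj1 : j < size F by lia.
  have hj2 : j.+1 < size F by lia.
  have hlt := hc_lt j j.+1 (ltnSn j) hj2.
  have [hk1 e1] := hc_in j hj1.
  have [hk2 e2] := hc_in j.+1 hj2.
  have := run_comp (A:=A) (f:=Aw) (st:=st) (ms:=ms) (d := c j.+1 - c j) (i := c j)
    (hrange (c j) (c j.+1 - c j) ltac:(lia)).
  by rewrite subnKC ?e1 ?e2 //; apply: ltnW.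
have [hc00 hc0] := hc_in 0 ltac:(lia).
have [hcn1 hcn] := hc_in n hF.
have hpre : @run M ab A (q0 A) (flatten (map Aw (iota 0 (c 0)))) (mprod (map ms (iota 0 (c 0)))) qq.
  have := run_comp (A:=A) (f:=Aw) (st:=st) (ms:=ms) (d := c 0) (i := 0)
    (hrange 0 (c 0) ltac:(lia)).
  by rewrite Hst0 add0n hc0.
have hsuf : @run M ab A qq (flatten (map Aw (iota (c n) (k - c n))) ++ nseq k Lb)
    (mmul (mprod (map ms (iota (c n) (k - c n)))) y) qf.
  have := run_comp (A:=A) (f:=Aw) (st:=st) (ms:=ms) (d := k - c n) (i := c n)
    (hrange (c n) (k - c n) ltac:(lia)).
  rewrite subnKC ?hcn //; last by case/andP: hcn1.
  move=> H; exact: run_app H Htail.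
have T1 : forall t, t <= n ->
    flatten (map U (iota 0 t)) = flatten (map Aw (iota (c 0) (c t - c 0))).
  elim=> [|t IH] ht; first by rewrite subnn.
  rewrite -[t.+1]addn1 iotaD map_cat flatten_cat (IH (ltnW ht)) add0n /= cats0 /U.
  rewrite flat_tele ?addn1 //.
  + apply: hc_le; lia.
  + apply: ltnW; apply: hc_lt; lia.
have T2 : forall t, t <= n ->
    mprod (map mU (iota 0 t)) = mprod (map ms (iota (c 0) (c t - c 0))).
  elim=> [|t IH] ht; first by rewrite subnn.
  rewrite -[t.+1]addn1 iotaD map_cat mprod_cat (IH (ltnW ht)) add0n [iota t 1]/= [map mU _]/= mprod_cons mprod_nil mmul1r /mU.
  rewrite mprod_tele ?addn1 //.
  + apply: hc_le; lia.
  + apply: ltnW; apply: hc_lt; lia.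
have [sg [hsg Heq]] := Hperm (fun i : 'I_n => mU i).
case: (pickP (fun i => sg i != i)) => [i0 hi0 | Hid]; last first.
  case/eqP: hsg; apply/permP => i; rewrite perm1; apply/eqP.
  by move: (Hid i) => /= /negbFE.
pose tau j := val (sg (insubd i0 j)).
have htau : forall i : 'I_n, tau (val i) = val (sg i) by move=> i; rewrite /tau valKd.
have htaun : forall j, tau j < n by move=> j; exact: ltn_ord.
have Heq' : mprod (map mU (iota 0 n)) = mprod (map mU (map tau (iota 0 n))).
  have E1 : map (fun i : 'I_n => mU i) (enum 'I_n) = map mU (iota 0 n).
    by rewrite -val_enum_ord -map_comp.
  have E2 : map (fun i : 'I_n => mU (sg i)) (enum 'I_n) = map mU (map tau (iota 0 n)).
    by rewrite -val_enum_ord -!map_comp; apply: eq_map => i /=; rewrite htau.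
  by rewrite -E1 -E2.
have Pex : exists j, (j < n) && (tau j != j) by exists (val i0); rewrite ltn_ord htau.
case: (ex_minnP Pex) => t /andP[ht htt] tmin.
have hfix : forall j, j < t -> tau j = j.
  move=> j hj; apply/eqP; apply: contraTT (hj) => hne; rewrite -leqNgt; apply: tmin.
  rewrite hne andbT; lia.
pose w' := flatten (map Aw (iota 0 (c 0))) ++ (flatten (map U (map tau (iota 0 n))) ++
   (flatten (map Aw (iota (c n) (k - c n))) ++ nseq k Lb)).
have hrun' := run_app hpre (run_app (run_loops hloops (l := map tau (iota 0 n))
   ltac:(by apply/allP => j /mapP [i _ ->])) hsuf).
have hacc' : rat_accepts A I0 I1 w'.
  exists qf; eexists; split; first exact: hrun'.
  split; first exact: Hacc.
  exists x0; split; first exact: Hx0.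
  have hcnk : c n <= k by case/andP: hcn1.
  have e1 := mprod_tele ms (a:=0) (b:=c 0) (c:=c n) (leq0n _) (hc_le 0 n (leq0n _) hF).
  have e2 := mprod_tele ms (a:=0) (b:=c n) (c:=k) (leq0n _) hcnk.
  rewrite !subn0 in e1 e2.
  move: Hx1; rewrite Hx -e2 -e1 -(T2 n (leqnn n)) Heq' !mmulA.
  by [].
have hw' := (HL w').2 hacc'.
have Etau : map tau (iota 0 n) = iota 0 t ++ tau t :: map tau (iota t.+1 (n - t.+1)).
  have En : n = t + (n - t.+1).+1 by lia.
  rewrite {1}En iotaD map_cat add0n [iota t _]/= [map tau (_ :: _)]/=.
  congr (_ ++ _); rewrite -[RHS]map_id; apply/eq_in_map => j; rewrite mem_iota => /andP[_ hj].
  exact: hfix.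
have htt1 : (tau t).+1 < size F by have := htaun t; lia.
have [r Er] : exists r, U (tau t) = nseq (c (tau t)) Lb ++ La :: r.
  have hl := hc_lt (tau t) (tau t).+1 (ltnSn _) htt1.
  rewrite /U; have -> : c (tau t).+1 - c (tau t) = (c (tau t).+1 - c (tau t)).-1.+1 by lia.
  rewrite [iota _ _]/= [map _ (_ :: _)]/= [flatten (_ :: _)]/= /Aw -catA; eexists; reflexivity.
have [hct1 _] := hc_in t ltac:(lia).
have [hctt _] := hc_in (tau t) ltac:(lia).
have hpref : flatten (map Aw (iota 0 (c 0))) ++ flatten (map U (iota 0 t))
    = flatten (map Bw (iota 1 (c t).-1)) ++ nseq (c t) La.
  rewrite (T1 t (ltnW ht)).
  have := flat_tele Aw (a:=0) (b:=c 0) (c:=c t) (leq0n _) (hc_le 0 t (leq0n _) ltac:(lia)).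
  rewrite !subn0 => ->.
  have -> : c t = (c t).-1.+1 by lia.
  by rewrite A_to_B.
move: hw'; rewrite /w' Etau map_cat flatten_cat [map U (_ :: _)]/= [flatten (_ :: _)]/= Er.
rewrite -!catA catA hpref -catA => H.
have hall : all (leq 1) (iota 1 (c t).-1).
  by apply/allP => i; rewrite mem_iota => /andP[].
have H2 := blocks_cancel hall (@hd_nseq La (c t) _ ltac:(lia)) H.
rewrite cat_cons in H2.
have Ec := @final_neq (c t) (c (tau t)) _ ltac:(lia) ltac:(lia) H2.
have htn := htaun t.
case: (ltngtP t (tau t)) => h.
- have := hc_lt _ _ h ltac:(lia); lia.
- have := hc_lt _ _ h ltac:(lia); lia.
- by move: htt; rewrite -h eqxx.
Qed.
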